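(* Let $[\mathcal{F}],[\mathcal{E}]$ be two $\mathrm{PGL}(4)$-classes of tetrahedra of flags that are $(\sigma,\tau)$-glueable, and let $\mathcal{G}=\{[(\mathcal{F}',\mathcal{E}')]\in\mathcal{FL}_{\sigma,\tau}:\mathcal{F}'\in[\mathcal{F}],\ \mathcal{E}'\in[\mathcal{E}]\}$. Then the gluing parameter $g_\sigma^\tau$ restricted to $\mathcal{G}$ is a homeomorphism $\mathcal{G}\to\mathbb{R}^\times$.
   Context: Flags: $(V,\eta)$ with $\eta$ a plane of $\mathbb{RP}^3$ through $V$. Tetrahedron of flags: non-degenerate ($\eta_i(V_j)=0\iff i=j$) ordered quadruple $(V_m,\eta_m)_{m=1}^4$, $V_m$ not coplanar, with some projective tetrahedron with vertices $V_m$ whose interior misses all $\eta_m$. Edge-faces $\sigma=(ij)k$ are even permutations $[ijkl]$ of $\{1,2,3,4\}$. $\mathcal{F}=(V_m,\eta_m)$ and $\mathcal{E}=(W_m,\zeta_m)$ are glued along $(\sigma,\tau)$, $\sigma=(ij)k$ ($=[ijkl]$), $\tau=(i'j')k'$ ($=[i'j'k'l']$), if $(V_i,\eta_i)=(W_{j'},\zeta_{j'})$, $(V_j,\eta_j)=(W_{i'},\zeta_{i'})$, $(V_k,\eta_k)=(W_{k'},\zeta_{k'})$; classes are $(\sigma,\tau)$-glueable if they have such representatives. $\mathrm{FL}_{\sigma,\tau}$ is the set of pairs glued along $(\sigma,\tau)$ and $\mathcal{FL}_{\sigma,\tau}$ its quotient by diagonal $\mathrm{PGL}(4)$ (quotient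 topology). The gluing parameter of $(\mathcal{F},\mathcal{E})\in\mathrm{FL}_{\sigma,\tau}$ is $g^{\mathcal{E},\tau}_{\mathcal{F},\sigma}=-\frac{\bar\eta_i(\bar V_l)\,\bar\eta_j(\bar V_k)\,\bar\eta_{ijk}(\bar W_{l'})}{\bar\eta_i(\bar V_k)\,\bar\eta_j(\bar W_{l'})\,\bar\eta_{ijk}(\bar V_l)}$, where $\eta_{ijk}$ is the plane spanned by $V_i,V_j,V_k$ and bars denote representatives in $\mathbb{R}^4$, $(\mathbb{R}^4)^*$; it is $\mathrm{PGL}(4)$-invariant and defines $g_\sigma^\tau:\mathcal{FL}_{\sigma,\tau}\to\mathbb{R}^\times$. *)

(* Defs.v *)
From Stdlib Require Import Reals ClassicalEpsilon.
Open Scope R_scope.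

Inductive I4 : Type := i1 | i2 | i3 | i4.

Definition I4_eq_dec (a b : I4) : {a = b} + {a <> b}.
Proof. decide equality. Defined.

(** Vectors of R^4 and covectors (elements of (R^4)^* ), both as I4 -> R. *)
Definition vec := I4 -> R.

Definition sum4 (f : I4 -> R) : R := f i1 + f i2 + f i3 + f i4.

Definition ev (eta v : vec) : R := sum4 (fun k => eta k * v k).

Definition nonzero (v : vec) : Prop := exists k, v k <> 0.

Definition proj_eq (v w : vec) : Prop :=
  exists c : R, c <> 0 /\ forall k, v k = c * w k.

Definition det3_234 (x y z : vec) : R :=
  x i2 * (y i3 * z i4 - y i4 * z i3)
  - y i2 * (x i3 * z i4 - x i4 * z i3)
  + z i2 * (x i3 * y i4 - x i4 * y i3).

Definition det4 (a b c d : vec) : R :=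
  a i1 * det3_234 b c d - b i1 * det3_234 a c d
  + c i1 * det3_234 a b d - d i1 * det3_234 a b c.

Definition mat := I4 -> I4 -> R.
Definition mat_mul (A B : mat) : mat := fun r c => sum4 (fun k => A r k * B k c).
Definition id_mat : mat := fun r c => if I4_eq_dec r c then 1 else 0.
Definition inverse_pair (A B : mat) : Prop :=
  (forall r c, mat_mul A B r c = id_mat r c) /\ (forall r c, mat_mul B A r c = id_mat r c).
(** Action on vectors: v |-> A v ; action on covectors: eta |-> eta o A^{-1} = eta B. *)
Definition act_vec (A : mat) (v : vec) : vec := fun r => sum4 (fun c => A r c * v c).
Definition act_cov (eta : vec) (B : mat) : vec := fun c => sum4 (fun r => eta r * B r c).

(** A representative of an ordered quadruple of flags (V_m, eta_m). *)
Definition tetrep := ((I4 -> vec) * (I4 -> vec))%type.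
Definition tV (T : tetrep) : I4 -> vec := fst T.
Definition tEta (T : tetrep) : I4 -> vec := snd T.

Definition is_tet_flags (T : tetrep) : Prop :=
  (forall m, nonzero (tV T m)) /\ (forall m, nonzero (tEta T m)) /\
  (* non-degenerate: eta_i(V_j) = 0 iff i = j (in particular each (V_m,eta_m) is a flag) *)
  (forall i j, ev (tEta T i) (tV T j) = 0 <-> i = j) /\
  det4 (tV T i1) (tV T i2) (tV T i3) (tV T i4) <> 0 /\
  (* some projective tetrahedron with vertices V_m (choice of signs s_m), whose
     interior {[sum_m t_m s_m V_m] : all t_m > 0} misses all the planes eta_n *)
  exists s : I4 -> R, (forall m, s m = 1 \/ s m = -1) /\
    forall t : I4 -> R, (forall m, 0 < t m) ->
      forall n, ev (tEta T n) (fun r => sum4 (fun m => t m * s m * tV T m r)) <> 0.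

(** Same PGL(4)-class: T' = A . T (up to rescaling of each representative). *)
Definition tet_equiv (T T' : tetrep) : Prop :=
  exists A B : mat, inverse_pair A B /\
    forall m, proj_eq (tV T' m) (act_vec A (tV T m)) /\
              proj_eq (tEta T' m) (act_cov (tEta T m) B).

Definition pair_equiv (x y : tetrep * tetrep) : Prop :=
  exists A B : mat, inverse_pair A B /\
    forall m, proj_eq (tV (fst y) m) (act_vec A (tV (fst x) m)) /\
              proj_eq (tEta (fst y) m) (act_cov (tEta (fst x) m) B) /\
              proj_eq (tV (snd y) m) (act_vec A (tV (snd x) m)) /\
              proj_eq (tEta (snd y) m) (act_cov (tEta (snd x) m) B).

(** * Edge-faces: even permutations [ijkl] = [s i1, s i2, s i3, s i4] *)
Definition idx (a : I4) : nat := match a with i1 => 0 | i2 => 1 | i3 => 2 | i4 => 3 end%nat.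
Definition inv_pair (p : I4 -> I4) (a b : I4) : nat :=
  if Nat.ltb (idx (p b)) (idx (p a)) then 1%nat else 0%nat.
Definition inversions (p : I4 -> I4) : nat :=
  (inv_pair p i1 i2 + inv_pair p i1 i3 + inv_pair p i1 i4
   + inv_pair p i2 i3 + inv_pair p i2 i4 + inv_pair p i3 i4)%nat.
Definition is_edge_face (p : I4 -> I4) : Prop :=
  (forall a b, p a = p b -> a = b) /\ Nat.even (inversions p) = true.

Definition flag_eq (T : tetrep) (m : I4) (T' : tetrep) (m' : I4) : Prop :=
  proj_eq (tV T m) (tV T' m') /\ proj_eq (tEta T m) (tEta T' m').

Definition glued (sigma tau : I4 -> I4) (F E : tetrep) : Prop :=
  flag_eq F (sigma i1) E (tau i2) /\
  flag_eq F (sigma i2) E (tau i1) /\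
  flag_eq F (sigma i3) E (tau i3).

Definition glueable_classes (sigma tau : I4 -> I4) (F E : tetrep) : Prop :=
  exists F' E', is_tet_flags F' /\ is_tet_flags E' /\
    tet_equiv F F' /\ tet_equiv E E' /\ glued sigma tau F' E'.

(** Gluing parameter, computed on representatives; the plane eta_{ijk} is
    represented by the covector x |-> det(V_i, V_j, V_k, x). *)
Definition gluing_param (sigma tau : I4 -> I4) (F E : tetrep) : R :=
  let i := sigma i1 in let j := sigma i2 in let k := sigma i3 in let l := sigma i4 in
  let l' := tau i4 in
  let V := tV F in let eta := tEta F in let W := tV E in
  - (ev (eta i) (V l) * ev (eta j) (V k) * det4 (V i) (V j) (V k) (W l'))
  / (ev (eta i) (V k) * ev (eta j) (W l') * det4 (V i) (V j) (V k) (V l)).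

Definition FLrel (sigma tau : I4 -> I4) (x : tetrep * tetrep) : Prop :=
  is_tet_flags (fst x) /\ is_tet_flags (snd x) /\ glued sigma tau (fst x) (snd x).

Definition FLq (sigma tau : I4 -> I4) : Type :=
  { P : tetrep * tetrep -> Prop | exists x, FLrel sigma tau x /\ P = pair_equiv x }.

Definition rep {sigma tau} (q : FLq sigma tau) : tetrep * tetrep :=
  proj1_sig (constructive_indefinite_description _ (proj2_sig q)).

Definition g_bar (sigma tau : I4 -> I4) (q : FLq sigma tau) : R :=
  gluing_param sigma tau (fst (rep q)) (snd (rep q)).

(** Euclidean topology on the space of representatives (R^64). *)
Definition close (eps : R) (x y : tetrep * tetrep) : Prop :=
  forall m k,
    Rabs (tV (fst x) m k - tV (fst y) m k) < eps /\
    Rabs (tEta (fst x) m k - tEta (fst y) m k) < eps /\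
    Rabs (tV (snd x) m k - tV (snd y) m k) < eps /\
    Rabs (tEta (snd x) m k - tEta (snd y) m k) < eps.

Definition open_rep (O : tetrep * tetrep -> Prop) : Prop :=
  forall x, O x -> exists eps, 0 < eps /\ forall y, close eps x y -> O y.

(** Quotient topology on FLq: U is open iff its preimage in FL_{sigma,tau}
    is open in the subspace topology. *)
Definition open_FLq (sigma tau : I4 -> I4) (U : FLq sigma tau -> Prop) : Prop :=
  exists O, open_rep O /\
    forall x, FLrel sigma tau x -> ((exists q, U q /\ proj1_sig q x) <-> O x).

Definition Gset (sigma tau : I4 -> I4) (F E : tetrep) (q : FLq sigma tau) : Prop :=
  exists x, proj1_sig q x /\ tet_equiv F (fst x) /\ tet_equiv E (snd x).

Definition continuous_between {X Y : Type}
  (openX : (X -> Prop) -> Prop) (A : X -> Prop)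
  (openY : (Y -> Prop) -> Prop) (B : Y -> Prop) (f : X -> Y) : Prop :=
  forall V, openY V -> exists U, openX U /\ forall x, A x -> (V (f x) <-> U x).

Definition homeomorphism_between {X Y : Type}
  (openX : (X -> Prop) -> Prop) (A : X -> Prop)
  (openY : (Y -> Prop) -> Prop) (B : Y -> Prop) (f : X -> Y) : Prop :=
  (forall x, A x -> B (f x)) /\
  continuous_between openX A openY B f /\
  exists h : Y -> X,
    (forall y, B y -> A (h y)) /\
    (forall x, A x -> h (f x) = x) /\
    (forall y, B y -> f (h y) = y) /\
    continuous_between openY B openX A h.

(* Main.v *)
Require Import Defs.
From Stdlib Require Import Reals Lra Classical ClassicalEpsilon FunctionalExtensionality PropExtensionality ProofIrrelevance.
Open Scope R_scope.

Ltac ex4 := unfold sum4; cbv beta.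

Definition uvec (c : I4) : vec := fun r => if I4_eq_dec r c then 1 else 0.
Definition detm (A : mat) : R :=
  det4 (fun r => A r i1) (fun r => A r i2) (fun r => A r i3) (fun r => A r i4).

Lemma act_vec_mul A B v r : act_vec (mat_mul A B) v r = act_vec A (act_vec B v) r.
Proof. unfold act_vec, mat_mul; ex4; ring. Qed.
Lemma act_cov_mul e A B c : act_cov e (mat_mul A B) c = act_cov (act_cov e A) B c.
Proof. unfold act_cov, mat_mul; ex4; ring. Qed.
Lemma act_vec_ext A A' v v' r : (forall r c, A r c = A' r c) -> (forall k, v k = v' k) ->
  act_vec A v r = act_vec A' v' r.
Proof. intros H1 H2; unfold act_vec; ex4; rewrite !H1, !H2; reflexivity. Qed.
Lemma act_cov_ext e e' A A' c : (forall r c, A r c = A' r c) -> (forall k, e k = e' k) ->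
  act_cov e A c = act_cov e' A' c.
Proof. intros H1 H2; unfold act_cov; ex4; rewrite !H1, !H2; reflexivity. Qed.
Lemma act_vec_id v r : act_vec id_mat v r = v r.
Proof. unfold act_vec, id_mat; ex4; destruct r; simpl; ring. Qed.
Lemma act_cov_id e c : act_cov e id_mat c = e c.
Proof. unfold act_cov, id_mat; ex4; destruct c; simpl; ring. Qed.
Lemma act_vec_scal A c v r : act_vec A (fun k => c * v k) r = c * act_vec A v r.
Proof. unfold act_vec; ex4; ring. Qed.
Lemma act_cov_scal A c e k : act_cov (fun r => c * e r) A k = c * act_cov e A k.
Proof. unfold act_cov; ex4; ring. Qed.
Lemma ev_ext e e' v v' : (forall k, e k = e' k) -> (forall k, v k = v' k) -> ev e v = ev e' v'.
Proof. intros H1 H2; unfold ev; ex4; rewrite !H1, !H2; reflexivity. Qed.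
Lemma ev_act e B A v : ev (act_cov e B) (act_vec A v) = ev e (act_vec (mat_mul B A) v).
Proof. unfold ev, act_cov, act_vec, mat_mul; ex4; ring. Qed.
Lemma ev_act2 e A v : ev e (act_vec A v) = ev (act_cov e A) v.
Proof. unfold ev, act_cov, act_vec; ex4; ring. Qed.
Lemma ev_lin e x y s t : ev e (fun k => s * x k + t * y k) = s * ev e x + t * ev e y.
Proof. unfold ev; ex4; ring. Qed.
Lemma ev_sym e v : ev e v = ev v e.
Proof. unfold ev; ex4; ring. Qed.

Lemma inv_vec A B v r : inverse_pair A B -> act_vec B (act_vec A v) r = v r.
Proof. intros [H1 H2]. rewrite <- act_vec_mul. rewrite (act_vec_ext _ id_mat v v); auto using act_vec_id. Qed.
Lemma inv_vec' A B v r : inverse_pair A B -> act_vec A (act_vec B v) r = v r.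
Proof. intros [H1 H2]. rewrite <- act_vec_mul. rewrite (act_vec_ext _ id_mat v v); auto using act_vec_id. Qed.
Lemma inv_cov A B e c : inverse_pair A B -> act_cov (act_cov e A) B c = e c.
Proof. intros [H1 H2]. rewrite <- act_cov_mul. rewrite (act_cov_ext _ e _ id_mat); auto using act_cov_id. Qed.
Lemma inv_cov' A B e c : inverse_pair A B -> act_cov (act_cov e B) A c = e c.
Proof. intros [H1 H2]. rewrite <- act_cov_mul. rewrite (act_cov_ext _ e _ id_mat); auto using act_cov_id. Qed.
Lemma ev_inv A B e v : inverse_pair A B -> ev (act_cov e B) (act_vec A v) = ev e v.
Proof. intros [H1 H2]. rewrite ev_act. apply ev_ext; auto. intro k.
  rewrite (act_vec_ext _ id_mat v v); auto using act_vec_id. Qed.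

Lemma mat_mul_assoc A B C r c : mat_mul (mat_mul A B) C r c = mat_mul A (mat_mul B C) r c.
Proof. unfold mat_mul; ex4; ring. Qed.
Lemma mat_mul_ext A A' B B' r c : (forall r c, A r c = A' r c) -> (forall r c, B r c = B' r c) ->
  mat_mul A B r c = mat_mul A' B' r c.
Proof. intros H1 H2; unfold mat_mul; ex4; rewrite !H1, !H2; reflexivity. Qed.
Lemma mat_mul_id_r A r c : mat_mul A id_mat r c = A r c.
Proof. unfold mat_mul, id_mat; ex4; destruct c; simpl; ring. Qed.
Lemma mat_mul_id_l A r c : mat_mul id_mat A r c = A r c.
Proof. unfold mat_mul, id_mat; ex4; destruct r; simpl; ring. Qed.

Lemma inverse_pair_sym A B : inverse_pair A B -> inverse_pair B A.
Proof. intros [H1 H2]; split; auto. Qed.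
Lemma inverse_pair_id : inverse_pair id_mat id_mat.
Proof. split; intros; apply mat_mul_id_l. Qed.
Lemma inverse_pair_mul A B A' B' : inverse_pair A B -> inverse_pair A' B' ->
  inverse_pair (mat_mul A' A) (mat_mul B B').
Proof.
  intros [H1 H2] [H3 H4]; split; intros r c.
  - rewrite mat_mul_assoc. transitivity (mat_mul A' B' r c); auto.
    apply mat_mul_ext; [reflexivity|]. intros r' c'. rewrite <- mat_mul_assoc.
    rewrite (mat_mul_ext _ id_mat B' B') by auto. apply mat_mul_id_l.
  - rewrite mat_mul_assoc. transitivity (mat_mul B A r c); auto.
    apply mat_mul_ext; [reflexivity|]. intros r' c'. rewrite <- mat_mul_assoc.
    rewrite (mat_mul_ext _ id_mat A A) by auto. apply mat_mul_id_l.
Qed.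

Lemma proj_eq_refl v : proj_eq v v.
Proof. exists 1; split; [lra| intros; ring]. Qed.
Lemma proj_eq_sym v w : proj_eq v w -> proj_eq w v.
Proof. intros [c [Hc H]]; exists (/c); split. apply Rinv_neq_0_compat; auto.
  intro k; rewrite H; field; auto. Qed.
Lemma proj_eq_trans u v w : proj_eq u v -> proj_eq v w -> proj_eq u w.
Proof. intros [c [Hc H]] [d [Hd H']]; exists (c*d); split. apply Rmult_integral_contrapositive; auto.
  intro k; rewrite H, H'; ring. Qed.
Lemma proj_eq_act A v w : proj_eq v w -> proj_eq (act_vec A v) (act_vec A w).
Proof. intros [c [Hc H]]; exists c; split; auto. intro k.
  rewrite <- act_vec_scal. apply act_vec_ext; auto. Qed.
Lemma proj_eq_actc B v w : proj_eq v w -> proj_eq (act_cov v B) (act_cov w B).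
Proof. intros [c [Hc H]]; exists c; split; auto. intro k.
  rewrite <- act_cov_scal. apply act_cov_ext; auto. Qed.
Lemma proj_eq_ext v v' w w' : (forall k, v k = v' k) -> (forall k, w k = w' k) ->
  proj_eq v w -> proj_eq v' w'.
Proof. intros H1 H2 [c [Hc H]]; exists c; split; auto. intro k; rewrite <- H1, <- H2; auto. Qed.

Definition trel (A B : mat) (T T' : tetrep) : Prop :=
  forall m, proj_eq (tV T' m) (act_vec A (tV T m)) /\ proj_eq (tEta T' m) (act_cov (tEta T m) B).

Lemma tet_equiv_iff T T' : tet_equiv T T' <-> exists A B, inverse_pair A B /\ trel A B T T'.
Proof. reflexivity. Qed.

Lemma pair_equiv_iff x y : pair_equiv x y <-> exists A B, inverse_pair A B /\
  trel A B (fst x) (fst y) /\ trel A B (snd x) (snd y).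
Proof. split.
  - intros [A [B [HI H]]]; exists A, B; split; [auto|split]; intro m; split; apply H.
  - intros [A [B [HI [H1 H2]]]]; exists A, B; split; auto. intro m;
    destruct (H1 m), (H2 m); auto.
Qed.

Lemma trel_id T : trel id_mat id_mat T T.
Proof. intro m; split.
  - apply (proj_eq_ext (tV T m) _ (tV T m)); auto using proj_eq_refl. intros; symmetry; apply act_vec_id.
  - apply (proj_eq_ext (tEta T m) _ (tEta T m)); auto using proj_eq_refl. intros; symmetry; apply act_cov_id.
Qed.

Lemma trel_sym A B T T' : inverse_pair A B -> trel A B T T' -> trel B A T' T.
Proof. intros HI H m; destruct (H m) as [H1 H2]; split.
  - apply proj_eq_sym. apply (proj_eq_act B) in H1.
    eapply proj_eq_ext; [ | | exact H1]; intros; [reflexivity | apply inv_vec; auto].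
  - apply proj_eq_sym. apply (proj_eq_actc A) in H2.
    eapply proj_eq_ext; [ | | exact H2]; intros; [reflexivity | apply inv_cov'; auto].
Qed.

Lemma trel_trans A B A' B' T T' T'' : trel A B T T' -> trel A' B' T' T'' ->
  trel (mat_mul A' A) (mat_mul B B') T T''.
Proof. intros H H' m; destruct (H m) as [H1 H2]; destruct (H' m) as [H3 H4]; split.
  - eapply proj_eq_trans. apply H3. apply (proj_eq_act A') in H1.
    eapply proj_eq_ext. 3: apply H1. reflexivity. intro; symmetry; apply act_vec_mul.
  - eapply proj_eq_trans. apply H4. apply (proj_eq_actc B') in H2.
    eapply proj_eq_ext. 3: apply H2. reflexivity. intro; symmetry; apply act_cov_mul.
Qed.

Lemma tet_equiv_refl T : tet_equiv T T.
Proof. apply tet_equiv_iff; exists id_mat, id_mat; split; auto using inverse_pair_id, trel_id. Qed.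
Lemma tet_equiv_sym T T' : tet_equiv T T' -> tet_equiv T' T.
Proof. rewrite !tet_equiv_iff; intros [A [B [HI H]]]; exists B, A; split;
  auto using inverse_pair_sym, trel_sym. Qed.
Lemma tet_equiv_trans T T' T'' : tet_equiv T T' -> tet_equiv T' T'' -> tet_equiv T T''.
Proof. rewrite !tet_equiv_iff; intros [A [B [HI H]]] [A' [B' [HI' H']]];
  exists (mat_mul A' A), (mat_mul B B'); split; eauto using inverse_pair_mul, trel_trans. Qed.

Lemma pair_equiv_refl x : pair_equiv x x.
Proof. apply pair_equiv_iff; exists id_mat, id_mat; split; [apply inverse_pair_id|split; apply trel_id]. Qed.
Lemma pair_equiv_sym x y : pair_equiv x y -> pair_equiv y x.
Proof. rewrite !pair_equiv_iff; intros [A [B [HI [H1 H2]]]]; exists B, A; split;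
  [|split]; eauto using inverse_pair_sym, trel_sym. Qed.
Lemma pair_equiv_trans x y z : pair_equiv x y -> pair_equiv y z -> pair_equiv x z.
Proof. rewrite !pair_equiv_iff; intros [A [B [HI [H1 H2]]]] [A' [B' [HI' [H1' H2']]]];
  exists (mat_mul A' A), (mat_mul B B'); split; [|split]; eauto using inverse_pair_mul, trel_trans. Qed.
Lemma pair_equiv_fst x y : pair_equiv x y -> tet_equiv (fst x) (fst y).
Proof. rewrite pair_equiv_iff, tet_equiv_iff; intros [A [B [HI [H1 H2]]]]; eauto. Qed.
Lemma pair_equiv_snd x y : pair_equiv x y -> tet_equiv (snd x) (snd y).
Proof. rewrite pair_equiv_iff, tet_equiv_iff; intros [A [B [HI [H1 H2]]]]; eauto. Qed.

Lemma det4_ext a b c d a' b' c' d' : (forall k, a k = a' k) -> (forall k, b k = b' k) ->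
  (forall k, c k = c' k) -> (forall k, d k = d' k) -> det4 a b c d = det4 a' b' c' d'.
Proof. intros Ha Hb Hc Hd; unfold det4, det3_234; rewrite !Ha, !Hb, !Hc, !Hd; reflexivity. Qed.

Lemma det4_act A a b c d : det4 (act_vec A a) (act_vec A b) (act_vec A c) (act_vec A d) = detm A * det4 a b c d.
Proof. unfold detm, det4, det3_234, act_vec; ex4; ring. Qed.

Lemma detm_mul A B : detm (mat_mul A B) = detm A * detm B.
Proof. unfold detm at 1 3. rewrite <- det4_act. apply det4_ext; intro k; unfold mat_mul, act_vec; reflexivity. Qed.

Lemma detm_id : detm id_mat = 1.
Proof. unfold detm, id_mat, det4, det3_234; simpl; ring. Qed.

Lemma detm_ext A A' : (forall r c, A r c = A' r c) -> detm A = detm A'.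
Proof. intros H; unfold detm; apply det4_ext; intro; apply H. Qed.

Lemma detm_inv A B : inverse_pair A B -> detm A * detm B = 1.
Proof. intros [H1 H2]. rewrite <- detm_mul, <- detm_id. apply detm_ext; auto. Qed.

Lemma detm_nz A B : inverse_pair A B -> detm A <> 0.
Proof. intros H E. pose proof (detm_inv A B H). rewrite E in H0. lra. Qed.

Lemma det4_scal a b c d a' b' c' d' sa sb sc sd :
  (forall k, a k = sa * a' k) -> (forall k, b k = sb * b' k) ->
  (forall k, c k = sc * c' k) -> (forall k, d k = sd * d' k) ->
  det4 a b c d = sa * sb * sc * sd * det4 a' b' c' d'.
Proof. intros Ha Hb Hc Hd; unfold det4, det3_234; rewrite !Ha, !Hb, !Hc, !Hd; ring. Qed.

Lemma ev_scal e v e' v' se sv : (forall k, e k = se * e' k) -> (forall k, v k = sv * v' k) ->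
  ev e v = se * sv * ev e' v'.
Proof. intros H1 H2; unfold ev; ex4; rewrite !H1, !H2; ring. Qed.

Definition tact (A B : mat) (T : tetrep) : tetrep :=
  (fun m => act_vec A (tV T m), fun m => act_cov (tEta T m) B).

Lemma nonzero_act A B v : inverse_pair A B -> Defs.nonzero v -> Defs.nonzero (act_vec A v).
Proof. intros HI [k Hk]. apply NNPP; intro Hn. apply Hk.
  rewrite <- (inv_vec A B v k HI). unfold act_vec at 1; ex4.
  assert (Z : forall r, act_vec A v r = 0).
  { intro r; apply NNPP; intro H; apply Hn; exists r; auto. }
  rewrite !Z; ring. Qed.

Lemma nonzero_actc A B e : inverse_pair A B -> Defs.nonzero e -> Defs.nonzero (act_cov e B).
Proof. intros HI [k Hk]. apply NNPP; intro Hn. apply Hk.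
  rewrite <- (inv_cov' A B e k HI). unfold act_cov at 1; ex4.
  assert (Z : forall r, act_cov e B r = 0).
  { intro r; apply NNPP; intro H; apply Hn; exists r; auto. }
  rewrite !Z; ring. Qed.

Lemma tet_tact A B T : inverse_pair A B -> is_tet_flags T -> is_tet_flags (tact A B T).
Proof.
  intros HI [H1 [H2 [H3 [H4 [s [Hs H5]]]]]]. unfold is_tet_flags, tact, tV, tEta in *. cbn [fst snd].
  split; [|split; [|split; [|split]]].
  - intro m; apply nonzero_act with B; auto.
  - intro m; apply nonzero_actc with A; auto.
  - intros i j. rewrite ev_inv by auto. apply H3.
  - rewrite det4_act. apply Rmult_integral_contrapositive; split; auto. apply detm_nz with B; auto.
  - exists s; split; auto. intros t Ht n.
    rewrite (ev_ext _ (act_cov (snd T n) B) _ (act_vec A (fun r => sum4 (fun m => t m * s m * fst T m r)))).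
    + rewrite ev_inv by auto. apply H5; auto.
    + reflexivity.
    + intro k; unfold act_vec; ex4; ring.
Qed.

Lemma trel_tact A B T : trel A B T (tact A B T).
Proof. intro m; split; apply proj_eq_refl. Qed.

Definition gpf (ei ej vi vj vk vl w : vec) : R :=
  - (ev ei vl * ev ej vk * det4 vi vj vk w) / (ev ei vk * ev ej w * det4 vi vj vk vl).

Lemma gp_gpf sigma tau F E : gluing_param sigma tau F E =
  gpf (tEta F (sigma i1)) (tEta F (sigma i2)) (tV F (sigma i1)) (tV F (sigma i2))
      (tV F (sigma i3)) (tV F (sigma i4)) (tV E (tau i4)).
Proof. reflexivity. Qed.

Lemma ratio_lem K n d : K <> 0 -> - (K * n) / (K * d) = - n / d.
Proof. intros HK. destruct (Req_dec d 0) as [->|Hd].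
  - rewrite Rmult_0_r. unfold Rdiv. rewrite Rinv_0. ring.
  - field; auto.
Qed.

Lemma pe_act A v w : proj_eq w (act_vec A v) -> exists c, c <> 0 /\ forall k, w k = c * act_vec A v k.
Proof. auto. Qed.

Lemma gpf_inv A B ei ej vi vj vk vl w ei' ej' vi' vj' vk' vl' w' :
  inverse_pair A B ->
  proj_eq ei' (act_cov ei B) -> proj_eq ej' (act_cov ej B) ->
  proj_eq vi' (act_vec A vi) -> proj_eq vj' (act_vec A vj) -> proj_eq vk' (act_vec A vk) ->
  proj_eq vl' (act_vec A vl) -> proj_eq w' (act_vec A w) ->
  gpf ei' ej' vi' vj' vk' vl' w' = gpf ei ej vi vj vk vl w.
Proof.
  intros HI [c1 [N1 H1]] [c2 [N2 H2]] [c3 [N3 H3]] [c4 [N4 H4]] [c5 [N5 H5]] [c6 [N6 H6]] [c7 [N7 H7]].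
  unfold gpf.
  rewrite (ev_scal _ _ _ _ _ _ H1 H6), (ev_scal _ _ _ _ _ _ H2 H5), (ev_scal _ _ _ _ _ _ H1 H5),
    (ev_scal _ _ _ _ _ _ H2 H7).
  rewrite (det4_scal _ _ _ _ _ _ _ _ _ _ _ _ H3 H4 H5 H7), (det4_scal _ _ _ _ _ _ _ _ _ _ _ _ H3 H4 H5 H6).
  rewrite !det4_act, !ev_inv by auto.
  set (K := c1 * c6 * c2 * c5 * c3 * c4 * c5 * c7 * detm A).
  assert (HK : K <> 0).
  { unfold K. pose proof (detm_nz A B HI).
    repeat apply Rmult_integral_contrapositive_currified; auto. }
  rewrite <- (ratio_lem K (ev ei vl * ev ej vk * det4 vi vj vk w) (ev ei vk * ev ej w * det4 vi vj vk vl)) by auto.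
  unfold Rdiv. apply (f_equal2 Rmult); [apply f_equal| apply f_equal]; unfold K; ring.
Qed.

Lemma det4_perm (W : I4 -> vec) a b c d : a <> b -> a <> c -> a <> d -> b <> c -> b <> d -> c <> d ->
  det4 (W a) (W b) (W c) (W d) = det4 (W i1) (W i2) (W i3) (W i4) \/
  det4 (W a) (W b) (W c) (W d) = - det4 (W i1) (W i2) (W i3) (W i4).
Proof. intros; destruct a, b, c, d; try congruence; unfold det4, det3_234;
  first [left; ring | right; ring]. Qed.

Lemma det4_perm_nz (W : I4 -> vec) a b c d : a <> b -> a <> c -> a <> d -> b <> c -> b <> d -> c <> d ->
  det4 (W i1) (W i2) (W i3) (W i4) <> 0 -> det4 (W a) (W b) (W c) (W d) <> 0.
Proof. intros. destruct (det4_perm W a b c d) as [E|E]; auto; rewrite E; lra. Qed.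

Lemma inj_neq (s : I4 -> I4) a b : (forall x y, s x = s y -> x = y) -> a <> b -> s a <> s b.
Proof. intros H N E; apply N, H, E. Qed.

Ltac dist s Hs := repeat split; apply (inj_neq s); auto; discriminate.

Definition gnum (ei ej vi vj vk vl w : vec) : R := ev ei vl * ev ej vk * det4 vi vj vk w.
Definition gden (ei ej vi vj vk vl w : vec) : R := ev ei vk * ev ej w * det4 vi vj vk vl.

Lemma gpf_nd ei ej vi vj vk vl w : gpf ei ej vi vj vk vl w = - gnum ei ej vi vj vk vl w / gden ei ej vi vj vk vl w.
Proof. reflexivity. Qed.

Definition args (sigma tau : I4 -> I4) (x : tetrep * tetrep) (f : vec -> vec -> vec -> vec -> vec -> vec -> vec -> R) : R :=
  f (tEta (fst x) (sigma i1)) (tEta (fst x) (sigma i2)) (tV (fst x) (sigma i1)) (tV (fst x) (sigma i2))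
      (tV (fst x) (sigma i3)) (tV (fst x) (sigma i4)) (tV (snd x) (tau i4)).

Lemma ev_nz T i j : is_tet_flags T -> i <> j -> ev (tEta T i) (tV T j) <> 0.
Proof. intros [_ [_ [H _]]] N E. apply N, H, E. Qed.

Lemma FL_nz sigma tau x : is_edge_face sigma -> is_edge_face tau -> FLrel sigma tau x ->
  args sigma tau x gnum <> 0 /\ args sigma tau x gden <> 0.
Proof.
  intros [Is _] [It _] [HF [HE [[[c1 [N1 H1]] [d1 [M1 K1]]] [[[c2 [N2 H2]] [d2 [M2 K2]]] [[c3 [N3 H3]] [d3 [M3 K3]]]]]]].
  unfold args, gnum, gden.
  assert (DF : det4 (tV (fst x) i1) (tV (fst x) i2) (tV (fst x) i3) (tV (fst x) i4) <> 0) by apply HF.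
  assert (DE : det4 (tV (snd x) i1) (tV (snd x) i2) (tV (snd x) i3) (tV (snd x) i4) <> 0) by apply HE.
  split; repeat apply Rmult_integral_contrapositive_currified.
  - apply ev_nz; auto. apply (inj_neq sigma); auto; discriminate.
  - apply ev_nz; auto. apply (inj_neq sigma); auto; discriminate.
  - rewrite (det4_scal _ _ _ _ _ _ _ _ c1 c2 c3 1 H1 H2 H3 (fun k => eq_sym (Rmult_1_l _))).
    repeat apply Rmult_integral_contrapositive_currified; auto; try lra.
    apply det4_perm_nz; auto; apply (inj_neq tau); auto; discriminate.
  - apply ev_nz; auto. apply (inj_neq sigma); auto; discriminate.
  - rewrite (ev_scal _ _ _ _ d2 1 K2 (fun k => eq_sym (Rmult_1_l _))).
    repeat apply Rmult_integral_contrapositive_currified; auto; try lra.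
    apply ev_nz; auto. apply (inj_neq tau); auto; discriminate.
  - apply det4_perm_nz; auto; apply (inj_neq sigma); auto; discriminate.
Qed.

Lemma gp_args sigma tau x : gluing_param sigma tau (fst x) (snd x) = - args sigma tau x gnum / args sigma tau x gden.
Proof. reflexivity. Qed.

Lemma gp_nz sigma tau x : is_edge_face sigma -> is_edge_face tau -> FLrel sigma tau x ->
  gluing_param sigma tau (fst x) (snd x) <> 0.
Proof. intros. destruct (FL_nz sigma tau x) as [A B]; auto. rewrite gp_args.
  unfold Rdiv. intro E. apply Rmult_integral in E. destruct E as [E|E].
  - apply A; lra.
  - apply Rinv_neq_0_compat in B; auto. Qed.

Lemma gp_inv sigma tau x y : pair_equiv x y ->
  gluing_param sigma tau (fst x) (snd x) = gluing_param sigma tau (fst y) (snd y).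
Proof. intros [A [B [HI H]]]. rewrite !gp_gpf. symmetry. apply gpf_inv with A B; auto; apply H. Qed.

Lemma sum_t (a : I4 -> R) b b' x y : b <> b' ->
  sum4 (fun m => (1 + (if I4_eq_dec m b then x else 0) + (if I4_eq_dec m b' then y else 0)) * a m)
  = sum4 a + x * a b + y * a b'.
Proof. intros; destruct b, b'; try congruence; unfold sum4; simpl; ring. Qed.

Lemma conv_signs T : is_tet_flags T -> exists s : I4 -> R, (forall m, s m = 1 \/ s m = -1) /\
  forall n b b', b <> b' -> b <> n -> b' <> n ->
    0 < ev (tEta T n) (tV T b) * s b * (ev (tEta T n) (tV T b') * s b').
Proof.
  intros HT. pose proof HT as [_ [_ [H3 [_ [s [Hs H5]]]]]].
  exists s; split; auto. intros n b b' Nbb Nb Nb'.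
  set (a := fun m => ev (tEta T n) (tV T m) * s m).
  assert (Sn : forall m, s m <> 0) by (intro m; destruct (Hs m); lra).
  assert (Ab : a b <> 0) by (unfold a; apply Rmult_integral_contrapositive_currified; auto; apply ev_nz; auto).
  assert (Ab' : a b' <> 0) by (unfold a; apply Rmult_integral_contrapositive_currified; auto; apply ev_nz; auto).
  change (0 < a b * a b').
  destruct (Rlt_or_le 0 (a b * a b')) as [P|P]; auto. exfalso.
  assert (Neg : a b * a b' < 0).
  { destruct P as [P|P]; auto. apply Rmult_integral in P; destruct P; contradiction. }
  set (S := sum4 a).
  destruct (Rle_or_lt 0 (- S * a b)) as [Q|Q].
  - set (x := - S / a b).
    assert (Hx : 0 <= x).
    { unfold x. replace (- S / a b) with ((- S * a b) / (a b * a b)) by (field; auto).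
      apply Rmult_le_pos; auto. left; apply Rinv_0_lt_compat.
      destruct (Rlt_or_le 0 (a b)); nra. }
    apply (H5 (fun m => 1 + (if I4_eq_dec m b then x else 0) + (if I4_eq_dec m b' then 0 else 0)) ) with n.
    + intro m; destruct (I4_eq_dec m b), (I4_eq_dec m b'); lra.
    + unfold ev. transitivity (sum4 (fun m => (1 + (if I4_eq_dec m b then x else 0) + (if I4_eq_dec m b' then 0 else 0)) * a m)).
      * unfold a, ev, sum4; cbv beta. ring.
      * rewrite sum_t by auto. fold S. unfold x. field; auto.
  - set (y := - S / a b').
    assert (Hy : 0 <= y).
    { unfold y. replace (- S / a b') with ((- S * a b') / (a b' * a b')) by (field; auto).
      apply Rmult_le_pos.
      - assert (0 < (- S * a b) * (a b * a b')) by nra.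
        assert (0 < a b * a b) by (destruct (Rlt_or_le 0 (a b)); nra). nra.
      - left; apply Rinv_0_lt_compat. destruct (Rlt_or_le 0 (a b')); nra. }
    apply (H5 (fun m => 1 + (if I4_eq_dec m b then 0 else 0) + (if I4_eq_dec m b' then y else 0)) ) with n.
    + intro m; destruct (I4_eq_dec m b), (I4_eq_dec m b'); lra.
    + unfold ev. transitivity (sum4 (fun m => (1 + (if I4_eq_dec m b then 0 else 0) + (if I4_eq_dec m b' then y else 0)) * a m)).
      * unfold a, ev, sum4; cbv beta. ring.
      * rewrite sum_t by auto. fold S. unfold y. field; auto.
Qed.

Lemma G3_lem x y z w u v sa sb sc : (sa = 1 \/ sa = -1) -> (sb = 1 \/ sb = -1) -> (sc = 1 \/ sc = -1) ->
  0 < x*sb*(y*sc) -> 0 < z*sa*(w*sc) -> 0 < u*sa*(v*sb) -> x*w*u + y*z*v <> 0.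
Proof.
  intros Ha Hb Hc P1 P2 P3.
  assert (E: x*w*u*(y*z*v) = (x*sb*(y*sc))*(z*sa*(w*sc))*(u*sa*(v*sb)))
    by (destruct Ha as [->| ->]; destruct Hb as [->| ->]; destruct Hc as [->| ->]; ring).
  assert (Pos : 0 < x*w*u*(y*z*v)) by (rewrite E; apply Rmult_lt_0_compat; [apply Rmult_lt_0_compat|]; auto).
  intro S. assert (y*z*v = - (x*w*u)) by lra. rewrite H in Pos. nra.
Qed.

Definition picov (a b c : vec) : vec := fun col => det4 a b c (uvec col).
Definition Pv (ea eb ec : vec) : vec := fun r => det4 ea eb ec (uvec r).

Lemma ev_picov a b c x : ev (picov a b c) x = det4 a b c x.
Proof. unfold ev, picov, uvec, det4, det3_234, sum4; simpl; ring. Qed.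
Lemma ev_Pv ea eb ec y : ev y (Pv ea eb ec) = det4 ea eb ec y.
Proof. unfold ev, Pv, uvec, det4, det3_234, sum4; simpl; ring. Qed.
Lemma ev_uvec e k : ev e (uvec k) = e k.
Proof. unfold ev, uvec, sum4; destruct k; simpl; ring. Qed.
Lemma act_uvec A k r : act_vec A (uvec k) r = A r k.
Proof. unfold act_vec, uvec, sum4; destruct k; simpl; ring. Qed.

Definition det3f x11 x12 x13 x21 x22 x23 x31 x32 x33 : R :=
  x11*(x22*x33 - x23*x32) - x12*(x21*x33-x23*x31) + x13*(x21*x32-x22*x31).
Lemma CB a b c ea eb ec : ev (picov a b c) (Pv ea eb ec) =
  det3f (ev ea a) (ev ea b) (ev ea c) (ev eb a) (ev eb b) (ev eb c) (ev ec a) (ev ec b) (ev ec c).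
Proof. rewrite ev_picov. unfold det3f, Pv, uvec, det4, det3_234, ev, sum4; cbv beta; simpl. ring. Qed.

Definition Mg (pi P : vec) (g : R) : mat := fun r c => id_mat r c + g * P r * pi c.
Lemma act_Mg pi P g x r : act_vec (Mg pi P g) x r = x r + g * ev pi x * P r.
Proof. unfold act_vec, Mg, id_mat, ev, sum4; destruct r; simpl; ring. Qed.
Lemma cov_Mg pi P g e c : act_cov e (Mg pi P g) c = e c + g * ev e P * pi c.
Proof. unfold act_cov, Mg, id_mat, ev, sum4; destruct c; simpl; ring. Qed.
Lemma Mg_mul pi P g h r c : mat_mul (Mg pi P g) (Mg pi P h) r c = Mg pi P (g + h + g*h*ev pi P) r c.
Proof. unfold mat_mul, Mg, id_mat, ev, sum4; destruct r, c; simpl; ring. Qed.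
Lemma Mg_0 pi P r c : Mg pi P 0 r c = id_mat r c.
Proof. unfold Mg; ring. Qed.
Definition ginv (kap g : R) : R := - g / (1 + g * kap).
Lemma Mg_inv pi P g : 1 + g * ev pi P <> 0 -> inverse_pair (Mg pi P g) (Mg pi P (ginv (ev pi P) g)).
Proof. intros H; split; intros r c; rewrite Mg_mul, <- (Mg_0 pi P r c); unfold ginv;
  [replace (g + - g / (1 + g * ev pi P) + g * (- g / (1 + g * ev pi P)) * ev pi P) with 0 by (field; auto)
  |replace (- g / (1 + g * ev pi P) + g + - g / (1 + g * ev pi P) * g * ev pi P) with 0 by (field; auto)];
  reflexivity. Qed.

Lemma cramer a b c d x r : det4 a b c d * x r =
  det4 x b c d * a r + det4 a x c d * b r + det4 a b x d * c r + det4 a b c x * d r.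
Proof. unfold det4, det3_234; destruct r; ring. Qed.

Lemma act_lin4 N a b c d s1 s2 s3 s4 r :
  act_vec N (fun k => s1 * a k + s2 * b k + s3 * c k + s4 * d k) r =
  s1 * act_vec N a r + s2 * act_vec N b r + s3 * act_vec N c r + s4 * act_vec N d r.
Proof. unfold act_vec, sum4; ring. Qed.

Lemma ev_lin4 e a b c d s1 s2 s3 s4 :
  ev e (fun k => s1 * a k + s2 * b k + s3 * c k + s4 * d k) =
  s1 * ev e a + s2 * ev e b + s3 * ev e c + s4 * ev e d.
Proof. unfold ev, sum4; ring. Qed.

Lemma mat_mul_scal_r A B s r c : mat_mul A (fun r c => s * B r c) r c = s * mat_mul A B r c.
Proof. unfold mat_mul, sum4; ring. Qed.
Lemma mat_mul_scal_l A B s r c : mat_mul (fun r c => s * A r c) B r c = s * mat_mul A B r c.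
Proof. unfold mat_mul, sum4; ring. Qed.

Lemma cancel_nz x y e : e <> 0 -> x * e = y * e -> x = y.
Proof. intros H E. apply Rmult_eq_reg_r with e; auto. Qed.

Lemma stab a b c d ea eb ec N N' :
  det4 a b c d <> 0 ->
  ev ea a = 0 -> ev eb b = 0 -> ev ec c = 0 ->
  ev ea b <> 0 -> ev ea c <> 0 -> ev eb a <> 0 -> ev eb c <> 0 -> ev ec a <> 0 -> ev ec b <> 0 ->
  ev ea b * ev eb c * ev ec a + ev ea c * ev eb a * ev ec b <> 0 ->
  inverse_pair N N' ->
  proj_eq a (act_vec N a) -> proj_eq b (act_vec N b) -> proj_eq c (act_vec N c) ->
  proj_eq ea (act_cov ea N') -> proj_eq eb (act_cov eb N') -> proj_eq ec (act_cov ec N') ->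
  exists lam g, lam <> 0 /\ 1 + g * ev (picov a b c) (Pv ea eb ec) <> 0 /\
    (forall r k, N r k = lam * Mg (picov a b c) (Pv ea eb ec) g r k) /\
    (forall r k, N' r k = / lam * Mg (picov a b c) (Pv ea eb ec) (ginv (ev (picov a b c) (Pv ea eb ec)) g) r k).
Proof.
  intros HD Ha Hb Hc Nab Nac Nba Nbc Nca Ncb HG HI
    [ma [Ma Pa]] [mb [Mb Pb]] [mc [Mc Pc]] [na [NA Qa]] [nb [NB Qb]] [nc [NC Qc]].
  set (pi := picov a b c). set (P := Pv ea eb ec). set (kap := ev pi P).
  assert (Hk : kap <> 0).
  { unfold kap, pi, P. rewrite CB, Ha, Hb, Hc. unfold det3f.
    replace (0 * (0 * 0 - ev eb c * ev ec b) - ev ea b * (ev eb a * 0 - ev eb c * ev ec a) +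
      ev ea c * (ev eb a * ev ec b - 0 * ev ec a)) with
      (ev ea b * ev eb c * ev ec a + ev ea c * ev eb a * ev ec b) by ring. auto. }
  assert (EVa : forall r, act_vec N a r = / ma * a r) by (intro r; rewrite Pa; field; auto).
  assert (EVb : forall r, act_vec N b r = / mb * b r) by (intro r; rewrite Pb; field; auto).
  assert (EVc : forall r, act_vec N c r = / mc * c r) by (intro r; rewrite Pc; field; auto).
  assert (CVgen : forall e n, (forall k, e k = n * act_cov e N' k) -> forall k, act_cov e N k = n * e k).
  { intros e n He k. rewrite (act_cov_ext e (fun r => n * act_cov e N' r) N N) by auto.
    rewrite act_cov_scal. rewrite inv_cov'; auto. }
  pose proof (CVgen ea na Qa) as CVa. pose proof (CVgen eb nb Qb) as CVb. pose proof (CVgen ec nc Qc) as CVc.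
  assert (REL : forall e n v m, (forall k, act_cov e N k = n * e k) -> (forall r, act_vec N v r = m * v r) ->
     ev e v <> 0 -> m = n).
  { intros e n v m H1 H2 H3. apply cancel_nz with (ev e v); auto.
    assert (X1 : ev e (act_vec N v) = m * ev e v).
    { rewrite (ev_ext e e (act_vec N v) (fun r => m * v r)) by auto.
      rewrite (ev_scal e (fun r => m * v r) e v 1 m) by (intros; ring). ring. }
    assert (X2 : ev e (act_vec N v) = n * ev e v).
    { rewrite ev_act2. rewrite (ev_scal _ v e v n 1 H1) by (intros; ring). ring. }
    rewrite <- X1, X2. ring. }
  pose proof (REL _ _ _ _ CVa EVb Nab) as R1.
  pose proof (REL _ _ _ _ CVa EVc Nac) as R2.
  pose proof (REL _ _ _ _ CVb EVa Nba) as R3.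
  pose proof (REL _ _ _ _ CVb EVc Nbc) as R4.
  pose proof (REL _ _ _ _ CVc EVa Nca) as R5.
  set (al := / ma).
  assert (Eb : / mb = al) by (unfold al; congruence).
  assert (Ec : / mc = al) by (unfold al; congruence).
  assert (Ea' : na = al) by (unfold al; congruence).
  assert (Eb' : nb = al) by (unfold al; congruence).
  assert (Ec' : nc = al) by (unfold al; congruence).
  assert (Hal : al <> 0) by (unfold al; apply Rinv_neq_0_compat; auto).
  set (D := det4 a b c d).
  set (w := fun r => act_vec N d r - al * d r).
  assert (Wgen : forall e, (forall k, act_cov e N k = al * e k) -> ev e w = 0).
  { intros e He. unfold w.
    rewrite (ev_ext e e _ (fun r => 1 * act_vec N d r + (- al) * d r)) by (intros; ring || reflexivity).
    rewrite ev_lin, ev_act2. rewrite (ev_scal _ d e d al 1 He) by (intros; ring). ring. }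
  assert (Wa : ev ea w = 0) by (apply Wgen; intro k; rewrite CVa, Ea'; auto).
  assert (Wb : ev eb w = 0) by (apply Wgen; intro k; rewrite CVb, Eb'; auto).
  assert (Wc : ev ec w = 0) by (apply Wgen; intro k; rewrite CVc, Ec'; auto).
  assert (NX : forall x r, act_vec N x r = al * x r + (ev pi x / D) * w r).
  { intros x r. apply cancel_nz with D; auto.
    transitivity (act_vec N (fun k => D * x k) r).
    - rewrite act_vec_scal; ring.
    - rewrite (act_vec_ext N N _ (fun k => det4 x b c d * a k + det4 a x c d * b k + det4 a b x d * c k + det4 a b c x * d k))
        by (intros; first [reflexivity | unfold D; apply cramer]).
      rewrite act_lin4, EVa, EVb, EVc, Eb, Ec. unfold pi. rewrite ev_picov. unfold w.
      fold al. pose proof (cramer a b c d x r) as C. fold D in C.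
      replace ((al * x r + det4 a b c x / D * (act_vec N d r - al * d r)) * D) with
        (al * (D * x r) + det4 a b c x * (act_vec N d r - al * d r)) by (field; auto).
      rewrite C. ring. }
  (* w is proportional to P *)
  set (u := fun r => kap * w r + (- ev pi w) * P r).
  assert (Ugen : forall e, ev e P = 0 -> ev e w = 0 -> ev e u = 0).
  { intros e H1 H2. unfold u. rewrite ev_lin, H1, H2. ring. }
  assert (PP : forall e1 e2 e3, ev e1 (Pv e1 e2 e3) = 0 /\ ev e2 (Pv e1 e2 e3) = 0 /\ ev e3 (Pv e1 e2 e3) = 0).
  { intros; rewrite !ev_Pv; unfold det4, det3_234; repeat split; ring. }
  destruct (PP ea eb ec) as [Pa0 [Pb0 Pc0]].
  assert (Ua : ev ea u = 0) by (apply Ugen; auto).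
  assert (Ub : ev eb u = 0) by (apply Ugen; auto).
  assert (Uc : ev ec u = 0) by (apply Ugen; auto).
  assert (Upi : ev pi u = 0) by (unfold u; rewrite ev_lin; fold kap; ring).
  assert (Ucr : forall r, D * u r = det4 u b c d * a r + det4 a u c d * b r + det4 a b u d * c r + 0 * d r).
  { intro r. pose proof (cramer a b c d u r) as C. fold D in C. rewrite C.
    unfold pi in Upi. rewrite ev_picov in Upi. rewrite Upi. ring. }
  assert (EQ : forall e, ev e (fun r => D * u r) = det4 u b c d * ev e a + det4 a u c d * ev e b + det4 a b u d * ev e c).
  { intro e. rewrite (ev_ext e e _ _ (fun _ => eq_refl) Ucr). rewrite ev_lin4. ring. }
  assert (Dz : forall e, ev e u = 0 -> ev e (fun r => D * u r) = 0).
  { intros e H. rewrite (ev_scal e (fun r => D * u r) e u 1 D) by (intros; ring). rewrite H; ring. }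
  pose proof (EQ ea) as E1. pose proof (EQ eb) as E2. pose proof (EQ ec) as E3.
  rewrite Dz in E1, E2, E3 by auto.
  rewrite Ha in E1. rewrite Hb in E2. rewrite Hc in E3.
  set (s1 := det4 u b c d) in *. set (s2 := det4 a u c d) in *. set (s3 := det4 a b u d) in *.
  assert (F1 : s2 * ev ea b + s3 * ev ea c = 0).
  { replace (s2 * ev ea b + s3 * ev ea c) with (s1 * 0 + s2 * ev ea b + s3 * ev ea c) by ring. symmetry; exact E1. }
  assert (F2 : s1 * ev eb a + s3 * ev eb c = 0).
  { replace (s1 * ev eb a + s3 * ev eb c) with (s1 * ev eb a + s2 * 0 + s3 * ev eb c) by ring. symmetry; exact E2. }
  assert (F3 : s1 * ev ec a + s2 * ev ec b = 0).
  { replace (s1 * ev ec a + s2 * ev ec b) with (s1 * ev ec a + s2 * ev ec b + s3 * 0) by ring. symmetry; exact E3. }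
  clear E1 E2 E3.
  assert (S3 : s3 = 0).
  { apply cancel_nz with (ev ea b * ev eb c * ev ec a + ev ea c * ev eb a * ev ec b); auto.
    transitivity (ev ea b * ev ec a * (s1 * ev eb a + s3 * ev eb c) + ev eb a * ev ec b * (s2 * ev ea b + s3 * ev ea c)
      - ev ea b * ev eb a * (s1 * ev ec a + s2 * ev ec b)); [ring|].
    rewrite F1, F2, F3. ring. }
  assert (S2 : s2 = 0).
  { apply cancel_nz with (ev ea b); auto. rewrite S3 in F1. rewrite Rmult_0_l.
    replace (s2 * ev ea b) with (s2 * ev ea b + 0 * ev ea c) by ring. exact F1. }
  assert (S1 : s1 = 0).
  { apply cancel_nz with (ev eb a); auto. rewrite S3 in F2. rewrite Rmult_0_l.
    replace (s1 * ev eb a) with (s1 * ev eb a + 0 * ev eb c) by ring. exact F2. }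
  assert (U0 : forall r, u r = 0).
  { intro r. apply cancel_nz with D; auto. rewrite Rmult_comm, Ucr, S1, S2, S3. ring. }
  assert (WP : forall r, w r = (ev pi w / kap) * P r).
  { intro r. pose proof (U0 r) as H. unfold u in H. apply cancel_nz with kap; auto.
    replace (ev pi w / kap * P r * kap) with (ev pi w * P r) by (field; auto).
    replace (w r * kap) with (kap * w r + - ev pi w * P r + ev pi w * P r) by ring. rewrite H. ring. }
  set (g := ev pi w / (D * kap * al)).
  assert (NX2 : forall x r, act_vec N x r = al * act_vec (Mg pi P g) x r).
  { intros x r. rewrite NX, act_Mg, WP. unfold g. field. repeat split; auto. }
  assert (NM : forall r k, N r k = al * Mg pi P g r k).
  { intros r k. rewrite <- act_uvec, NX2, act_uvec. reflexivity. }
  assert (Hg : 1 + g * kap <> 0).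
  { intro Z. apply Hk. unfold kap.
    assert (NP : forall r, act_vec N P r = 0).
    { intro r. rewrite NX2, act_Mg. fold kap.
      replace (P r + g * kap * P r) with ((1 + g * kap) * P r) by ring. rewrite Z; ring. }
    assert (P0 : forall r, P r = 0).
    { intro r. rewrite <- (inv_vec N N' P r HI). unfold act_vec at 1; unfold sum4. rewrite !NP; ring. }
    unfold ev, sum4. rewrite !P0; ring. }
  exists al, g. split; [auto|]. split; [auto|]. split; [auto|].
  destruct (Mg_inv pi P g Hg) as [MI1 MI2]. fold kap in MI1, MI2.
  intros r k.
  rewrite <- mat_mul_id_r.
  rewrite (mat_mul_ext N' N' id_mat (mat_mul (Mg pi P g) (Mg pi P (ginv kap g)))) by (intros; auto || (symmetry; auto)).
  rewrite <- mat_mul_assoc.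
  rewrite (mat_mul_ext (mat_mul N' (Mg pi P g)) (fun r k => / al * id_mat r k) _ (Mg pi P (ginv kap g))).
  - rewrite mat_mul_scal_l, mat_mul_id_l. reflexivity.
  - intros r' k'. rewrite (mat_mul_ext N' N' (Mg pi P g) (fun r k => / al * N r k)).
    + rewrite mat_mul_scal_r. destruct HI as [_ HI2]. rewrite HI2. reflexivity.
    + reflexivity.
    + intros. rewrite NM. field. auto.
  - reflexivity.
Qed.

Section Cons.
Variables (sigma tau : I4 -> I4) (F0 E0 : tetrep).
Hypotheses (Hs : is_edge_face sigma) (Ht : is_edge_face tau) (HF0 : is_tet_flags F0) (HE0 : is_tet_flags E0)
  (Hgl : glued sigma tau F0 E0).

Definition va := tV F0 (sigma i1).
Definition vb := tV F0 (sigma i2).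
Definition vc := tV F0 (sigma i3).
Definition vd := tV F0 (sigma i4).
Definition ea := tEta F0 (sigma i1).
Definition eb := tEta F0 (sigma i2).
Definition ec := tEta F0 (sigma i3).
Definition piF := picov va vb vc.
Definition PF := Pv ea eb ec.
Definition kap := ev piF PF.
Definition MM g := Mg piF PF g.
Definition MI g := Mg piF PF (ginv kap g).
Definition xg g : tetrep * tetrep := (F0, tact (MM g) (MI g) E0).

Lemma sinj : forall x y, sigma x = sigma y -> x = y.
Proof. destruct Hs; auto. Qed.
Lemma tinj : forall x y, tau x = tau y -> x = y.
Proof. destruct Ht; auto. Qed.

Lemma nzs a b : a <> b -> ev (tEta F0 (sigma a)) (tV F0 (sigma b)) <> 0.
Proof. intros; apply ev_nz; auto. apply inj_neq; auto using sinj. Qed.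
Lemma zs a : ev (tEta F0 a) (tV F0 a) = 0.
Proof. destruct HF0 as [_ [_ [H _]]]. apply H; auto. Qed.

Lemma G3F : ev ea vb * ev eb vc * ev ec va + ev ea vc * ev eb va * ev ec vb <> 0.
Proof.
  destruct (conv_signs F0 HF0) as [s [Hsg Hc]].
  apply G3_lem with (s (sigma i1)) (s (sigma i2)) (s (sigma i3)); auto;
  apply Hc; apply inj_neq; auto using sinj; discriminate.
Qed.

Lemma kap_nz : kap <> 0.
Proof. unfold kap, piF, PF. rewrite CB. unfold ea, eb, ec, va, vb, vc. rewrite !zs. intro H. apply G3F.
  unfold ea, eb, ec, va, vb, vc. rewrite <- H. unfold det3f. ring. Qed.

Lemma DF : det4 va vb vc vd <> 0.
Proof. destruct HF0 as [_ [_ [_ [H _]]]]. apply det4_perm_nz; auto; apply inj_neq; auto using sinj; discriminate. Qed.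

Lemma PF0 : ev ea PF = 0 /\ ev eb PF = 0 /\ ev ec PF = 0.
Proof. unfold PF; rewrite !ev_Pv; unfold det4, det3_234; repeat split; ring. Qed.

Lemma fix_vec g V r : ev piF V = 0 -> act_vec (Mg piF PF g) V r = V r.
Proof. intros H; rewrite act_Mg, H; ring. Qed.
Lemma fix_cov g e k : ev e PF = 0 -> act_cov e (Mg piF PF g) k = e k.
Proof. intros H; rewrite cov_Mg, H; ring. Qed.

Lemma pi_abc : ev piF va = 0 /\ ev piF vb = 0 /\ ev piF vc = 0.
Proof. unfold piF; rewrite !ev_picov; unfold det4, det3_234; repeat split; ring. Qed.

Lemma pe_zero_v V W : proj_eq V W -> ev piF V = 0 -> ev piF W = 0.
Proof. intros H Z. apply proj_eq_sym in H. destruct H as [c [Hc H]].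
  rewrite (ev_scal piF W piF V 1 c) by (intros; auto; ring). rewrite Z; ring. Qed.
Lemma pe_zero_c e e' : proj_eq e e' -> ev e PF = 0 -> ev e' PF = 0.
Proof. intros H Z. apply proj_eq_sym in H. destruct H as [c [Hc H]].
  rewrite (ev_scal e' PF e PF c 1) by (intros; auto; ring). rewrite Z; ring. Qed.

Lemma MMinv g : 1 + g * kap <> 0 -> inverse_pair (MM g) (MI g).
Proof. intros; apply Mg_inv; auto. Qed.

Lemma glue_fix g m m' : ev piF (tV F0 m) = 0 -> ev (tEta F0 m) PF = 0 ->
  flag_eq F0 m E0 m' -> flag_eq F0 m (tact (MM g) (MI g) E0) m'.
Proof. intros Z1 Z2 [H1 H2]. unfold tact, MM, MI; split; cbn [tV tEta fst snd].
  - eapply proj_eq_ext; [ | | exact H1]; [reflexivity|]. intro k. symmetry; apply fix_vec.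
    eapply pe_zero_v; eauto.
  - eapply proj_eq_ext; [ | | exact H2]; [reflexivity|]. intro k. symmetry; apply fix_cov.
    eapply pe_zero_c; eauto.
Qed.

Lemma FL_xg g : 1 + g * kap <> 0 -> FLrel sigma tau (xg g).
Proof. intros Hg. destruct pi_abc as [P1 [P2 P3]]. destruct PF0 as [Q1 [Q2 Q3]].
  destruct Hgl as [G1 [G2 G3]].
  split; [|split]; cbn [xg fst snd].
  - auto.
  - apply tet_tact; auto. apply MMinv; auto.
  - split; [|split]; apply glue_fix; auto.
Qed.

Lemma gp_xg g : gluing_param sigma tau F0 (tact (MM g) (MI g) E0) = (1 + g * kap) * gluing_param sigma tau F0 E0.
Proof. rewrite !gp_gpf. fold va vb vc vd ea eb. unfold tact; cbn [tV fst snd].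
  set (W := tV E0 (tau i4)). unfold gpf.
  assert (E1 : det4 va vb vc (act_vec (MM g) W) = (1 + g * kap) * det4 va vb vc W).
  { rewrite <- !ev_picov. fold piF. rewrite (ev_ext piF piF _ (fun r => 1 * W r + (g * ev piF W) * PF r))
      by (intros; first [reflexivity| unfold MM; rewrite act_Mg; ring]).
    rewrite ev_lin. fold kap. ring. }
  assert (E2 : ev eb (act_vec (MM g) W) = ev eb W).
  { rewrite (ev_ext eb eb _ (fun r => 1 * W r + (g * ev piF W) * PF r))
      by (intros; first [reflexivity| unfold MM; rewrite act_Mg; ring]).
    rewrite ev_lin. destruct PF0 as [_ [-> _]]. ring. }
  rewrite E1, E2. unfold Rdiv. ring.
Qed.

Lemma gp_xg' g : gluing_param sigma tau (fst (xg g)) (snd (xg g)) = (1 + g * kap) * gluing_param sigma tau F0 E0.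
Proof. apply gp_xg. Qed.

Lemma xg_equiv g : 1 + g * kap <> 0 -> tet_equiv E0 (snd (xg g)).
Proof. intros; apply tet_equiv_iff. exists (MM g), (MI g); split; [apply MMinv; auto | apply trel_tact]. Qed.

Lemma fix_from_glue A B A2 B2 F1 E1 m m' :
  inverse_pair A B -> trel A B F0 F1 -> trel A2 B2 E0 E1 ->
  flag_eq F0 m E0 m' -> flag_eq F1 m E1 m' ->
  proj_eq (tV F0 m) (act_vec (mat_mul B A2) (tV F0 m)) /\
  proj_eq (tEta F0 m) (act_cov (tEta F0 m) (mat_mul B2 A)).
Proof.
  intros HI T1 T2 [G1 G2] [G3 G4]. destruct (T1 m) as [U1 U2]. destruct (T2 m') as [U3 U4].
  split.
  - apply proj_eq_sym.
    assert (X : proj_eq (act_vec A2 (tV F0 m)) (act_vec A (tV F0 m))).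
    { eapply proj_eq_trans. apply proj_eq_act. exact G1.
      eapply proj_eq_trans. apply proj_eq_sym. exact U3.
      eapply proj_eq_trans. apply proj_eq_sym. exact G3. exact U1. }
    apply (proj_eq_act B) in X.
    eapply proj_eq_ext; [ | | exact X]; intro k; [symmetry; apply act_vec_mul| apply inv_vec; auto].
  - apply proj_eq_sym.
    assert (X : proj_eq (act_cov (tEta F0 m) B2) (act_cov (tEta F0 m) B)).
    { eapply proj_eq_trans. apply proj_eq_actc. exact G2.
      eapply proj_eq_trans. apply proj_eq_sym. exact U4.
      eapply proj_eq_trans. apply proj_eq_sym. exact G4. exact U2. }
    apply (proj_eq_actc A) in X.
    eapply proj_eq_ext; [ | | exact X]; intro k; [symmetry; apply act_cov_mul| apply inv_cov'; auto].
Qed.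

Lemma act_vec_smat X X' s v r : (forall r c, X r c = s * X' r c) -> act_vec X v r = s * act_vec X' v r.
Proof. intros H; unfold act_vec, sum4; rewrite !H; ring. Qed.
Lemma act_cov_smat X X' s e k : (forall r c, X r c = s * X' r c) -> act_cov e X k = s * act_cov e X' k.
Proof. intros H; unfold act_cov, sum4; rewrite !H; ring. Qed.

Lemma classify F1 E1 : FLrel sigma tau (F1, E1) -> tet_equiv F0 F1 -> tet_equiv E0 E1 ->
  exists g, 1 + g * kap <> 0 /\ pair_equiv (F1, E1) (xg g).
Proof.
  intros [HF1 [HE1 Hgl1]] T1 T2.
  rewrite tet_equiv_iff in T1, T2. destruct T1 as [A [B [HI T1]]]. destruct T2 as [A2 [B2 [HI2 T2]]].
  set (N := mat_mul B A2). set (N' := mat_mul B2 A).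
  assert (HN : inverse_pair N N') by (apply inverse_pair_mul; auto using inverse_pair_sym).
  destruct Hgl as [G1 [G2 G3]]. destruct Hgl1 as [G1' [G2' G3']].
  destruct (fix_from_glue A B A2 B2 F1 E1 _ _ HI T1 T2 G1 G1') as [Fa Ga].
  destruct (fix_from_glue A B A2 B2 F1 E1 _ _ HI T1 T2 G2 G2') as [Fb Gb].
  destruct (fix_from_glue A B A2 B2 F1 E1 _ _ HI T1 T2 G3 G3') as [Fc Gc].
  destruct (stab va vb vc vd ea eb ec N N') as [lam [g [Hl [Hg [NM NM']]]]]; auto.
  - apply DF.
  - apply zs. - apply zs. - apply zs.
  - apply nzs; discriminate. - apply nzs; discriminate. - apply nzs; discriminate.
  - apply nzs; discriminate. - apply nzs; discriminate. - apply nzs; discriminate.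
  - apply G3F.
  - exists g. fold piF PF kap in Hg, NM, NM'. split; auto.
    apply pair_equiv_iff. exists B, A. split; [apply inverse_pair_sym; auto|]. split; cbn [fst snd xg].
    + apply trel_sym; auto.
    + intro m. unfold tact; cbn [tV tEta fst snd]. destruct (T2 m) as [[c [Hc U1]] [c' [Hc' U2]]]. split.
      * exists (/ (c * lam)). split. { apply Rinv_neq_0_compat. apply Rmult_integral_contrapositive_currified; auto. }
        intro r. rewrite (act_vec_ext B B _ (fun k => c * act_vec A2 (tV E0 m) k)) by auto.
        rewrite act_vec_scal, <- act_vec_mul. fold N. rewrite (act_vec_smat N (MM g) lam) by auto.
        field. auto.
      * exists (lam / c'). split. { unfold Rdiv. apply Rmult_integral_contrapositive_currified; auto. apply Rinv_neq_0_compat; auto. }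
        intro k. rewrite (act_cov_ext _ (fun r => c' * act_cov (tEta E0 m) B2 r) A A) by auto.
        rewrite act_cov_scal, <- act_cov_mul. fold N'. rewrite (act_cov_smat N' (MI g) (/ lam)) by auto.
        field. auto.
Qed.

End Cons.

Definition ctsf (f : tetrep * tetrep -> R) (x : tetrep * tetrep) : Prop :=
  forall e, 0 < e -> exists d, 0 < d /\ forall y, close d x y -> Rabs (f y - f x) < e.

Lemma close_mono d d' x y : d <= d' -> close d x y -> close d' x y.
Proof. intros Hd H m k; destruct (H m k) as [A [B [C D]]]; repeat split; lra. Qed.

Lemma ctsf_const c x : ctsf (fun _ => c) x.
Proof. intros e He; exists 1; split; [lra|]. intros; rewrite Rminus_diag, Rabs_R0; auto. Qed.

Lemma ctsf_c1 m k x : ctsf (fun y => tV (fst y) m k) x.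
Proof. intros e He; exists e; split; auto. intros y H; rewrite Rabs_minus_sym; apply H. Qed.
Lemma ctsf_c2 m k x : ctsf (fun y => tEta (fst y) m k) x.
Proof. intros e He; exists e; split; auto. intros y H; rewrite Rabs_minus_sym; apply H. Qed.
Lemma ctsf_c3 m k x : ctsf (fun y => tV (snd y) m k) x.
Proof. intros e He; exists e; split; auto. intros y H; rewrite Rabs_minus_sym; apply H. Qed.
Lemma ctsf_c4 m k x : ctsf (fun y => tEta (snd y) m k) x.
Proof. intros e He; exists e; split; auto. intros y H; rewrite Rabs_minus_sym; apply H. Qed.

Lemma ctsf_plus f g x : ctsf f x -> ctsf g x -> ctsf (fun y => f y + g y) x.
Proof.
  intros Hf Hg e He. destruct (Hf (e/2)) as [d1 [D1 H1]]; [lra|]. destruct (Hg (e/2)) as [d2 [D2 H2]]; [lra|].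
  exists (Rmin d1 d2); split; [apply Rmin_pos; auto|]. intros y Hy.
  pose proof (H1 y (close_mono _ _ _ _ (Rmin_l d1 d2) Hy)). pose proof (H2 y (close_mono _ _ _ _ (Rmin_r d1 d2) Hy)).
  replace (f y + g y - (f x + g x)) with ((f y - f x) + (g y - g x)) by ring.
  eapply Rle_lt_trans; [apply Rabs_triang|]. lra.
Qed.

Lemma ctsf_opp f x : ctsf f x -> ctsf (fun y => - f y) x.
Proof. intros Hf e He. destruct (Hf e He) as [d [D H]]. exists d; split; auto. intros y Hy.
  replace (- f y - - f x) with (- (f y - f x)) by ring. rewrite Rabs_Ropp; auto. Qed.

Lemma ctsf_mult f g x : ctsf f x -> ctsf g x -> ctsf (fun y => f y * g y) x.
Proof.
  intros Hf Hg e He. set (K := 1 + Rabs (f x) + Rabs (g x)).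
  assert (HK : 0 < K) by (unfold K; pose proof (Rabs_pos (f x)); pose proof (Rabs_pos (g x)); lra).
  set (r := Rmin 1 (e / K)).
  assert (Hr : 0 < r) by (apply Rmin_pos; [lra| apply Rdiv_lt_0_compat; auto]).
  destruct (Hf r Hr) as [d1 [D1 H1]]. destruct (Hg r Hr) as [d2 [D2 H2]].
  exists (Rmin d1 d2); split; [apply Rmin_pos; auto|]. intros y Hy.
  pose proof (H1 y (close_mono _ _ _ _ (Rmin_l d1 d2) Hy)) as A. pose proof (H2 y (close_mono _ _ _ _ (Rmin_r d1 d2) Hy)) as B.
  replace (f y * g y - f x * g x) with ((f y - f x) * (g y - g x) + f x * (g y - g x) + g x * (f y - f x)) by ring.
  eapply Rle_lt_trans; [apply Rabs_triang|]. rewrite Rabs_mult.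
  eapply Rle_lt_trans; [apply Rplus_le_compat_r, Rabs_triang|]. rewrite !Rabs_mult.
  set (a := Rabs (f y - f x)) in *. set (b := Rabs (g y - g x)) in *.
  assert (Ha : 0 <= a) by apply Rabs_pos. assert (Hb : 0 <= b) by apply Rabs_pos.
  pose proof (Rabs_pos (f x)). pose proof (Rabs_pos (g x)).
  assert (r1 : r <= 1) by apply Rmin_l. assert (r2 : r <= e / K) by apply Rmin_r.
  assert (r3 : r * K <= e) by (apply Rmult_le_reg_r with (/ K); [apply Rinv_0_lt_compat; auto|];
     rewrite Rmult_assoc, Rinv_r; [lra|lra]).
  assert (a * b <= r * b) by (apply Rmult_le_compat_r; lra).
  assert (r * b <= r * r) by (apply Rmult_le_compat_l; lra).
  assert (r * r <= r * 1) by (apply Rmult_le_compat_l; lra).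
  assert (Rabs (f x) * b <= Rabs (f x) * r) by (apply Rmult_le_compat_l; lra).
  assert (Rabs (g x) * a <= Rabs (g x) * r) by (apply Rmult_le_compat_l; lra).
  assert (r * b < r * r) by (apply Rmult_lt_compat_l; lra).
  unfold K in r3. nra.
Qed.

Lemma ctsf_inv f x : ctsf f x -> f x <> 0 -> ctsf (fun y => / f y) x.
Proof.
  intros Hf Hx e He. set (m := Rabs (f x)). assert (Hm : 0 < m) by (apply Rabs_pos_lt; auto).
  set (r := Rmin (m / 2) (e * m * m / 2)).
  assert (Hr : 0 < r) by (apply Rmin_pos; [lra| apply Rdiv_lt_0_compat; [repeat apply Rmult_lt_0_compat|]; lra]).
  destruct (Hf r Hr) as [d [D H]]. exists d; split; auto. intros y Hy.
  pose proof (H y Hy) as A.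
  assert (A1 : Rabs (f y - f x) < m / 2) by (eapply Rlt_le_trans; [exact A| apply Rmin_l]).
  assert (A2 : Rabs (f y - f x) < e * m * m / 2) by (eapply Rlt_le_trans; [exact A| apply Rmin_r]).
  assert (Fy : m / 2 < Rabs (f y)).
  { pose proof (Rabs_triang_inv (f x) (f y)). rewrite Rabs_minus_sym in A1. fold m in H0. lra. }
  assert (fy0 : f y <> 0) by (intro Z; rewrite Z, Rabs_R0 in Fy; lra).
  replace (/ f y - / f x) with ((f x - f y) * / (f y * f x)) by (field; auto).
  rewrite Rabs_mult, Rabs_inv, Rabs_mult. fold m. rewrite Rabs_minus_sym.
  apply Rmult_lt_reg_r with (Rabs (f y) * m). { apply Rmult_lt_0_compat; lra. }
  rewrite Rmult_assoc, Rinv_l by (apply Rgt_not_eq; apply Rmult_lt_0_compat; lra).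
  rewrite Rmult_1_r.
  assert (e * (m / 2 * m) < e * (Rabs (f y) * m)) by (apply Rmult_lt_compat_l; auto; apply Rmult_lt_compat_r; lra).
  lra.
Qed.

Lemma ctsf_ev e v x : (forall k, ctsf (fun y => e y k) x) -> (forall k, ctsf (fun y => v y k) x) ->
  ctsf (fun y => ev (e y) (v y)) x.
Proof. intros He Hv. unfold ev, sum4.
  repeat apply ctsf_plus; apply ctsf_mult; auto. Qed.

Lemma ctsf_det4 a b c d x : (forall k, ctsf (fun y => a y k) x) -> (forall k, ctsf (fun y => b y k) x) ->
  (forall k, ctsf (fun y => c y k) x) -> (forall k, ctsf (fun y => d y k) x) ->
  ctsf (fun y => det4 (a y) (b y) (c y) (d y)) x.
Proof. intros Ha Hb Hc Hd. unfold det4, det3_234. unfold Rminus.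
  repeat first [apply ctsf_plus | apply ctsf_mult | apply ctsf_opp]; auto. Qed.

Lemma ctsf_ext f g x : ctsf f x -> (forall y, f y = g y) -> ctsf g x.
Proof. intros H E e He. destruct (H e He) as [d [D Hd]]. exists d; split; auto. intros y Hy.
  rewrite <- !E; auto. Qed.

Lemma ctsf_num sigma tau x : ctsf (fun y => args sigma tau y gnum) x.
Proof. unfold args, gnum. apply ctsf_mult; [apply ctsf_mult|];
  first [apply ctsf_ev | apply ctsf_det4]; intros; first [apply ctsf_c1|apply ctsf_c2|apply ctsf_c3|apply ctsf_c4]. Qed.
Lemma ctsf_den sigma tau x : ctsf (fun y => args sigma tau y gden) x.
Proof. unfold args, gden. apply ctsf_mult; [apply ctsf_mult|];
  first [apply ctsf_ev | apply ctsf_det4]; intros; first [apply ctsf_c1|apply ctsf_c2|apply ctsf_c3|apply ctsf_c4]. Qed.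

Lemma ctsf_gp sigma tau x : args sigma tau x gden <> 0 ->
  ctsf (fun y => gluing_param sigma tau (fst y) (snd y)) x.
Proof. intros H. apply ctsf_ext with (fun y => (- args sigma tau y gnum) * / args sigma tau y gden).
  - apply ctsf_mult. apply ctsf_opp, ctsf_num. apply ctsf_inv; auto. apply ctsf_den.
  - intro y. rewrite gp_args. reflexivity.
Qed.

Lemma cont_eps f y : continuity_pt f y -> forall e, 0 < e -> exists d, 0 < d /\ forall z, Rabs (z - y) < d -> Rabs (f z - f y) < e.
Proof. intros H e He. destruct (H e He) as [d [D Hd]]. exists d; split; auto. intros z Hz.
  destruct (Req_dec z y) as [->|N]. rewrite Rminus_diag, Rabs_R0; auto.
  apply (Hd z). split. split. exact I. auto. exact Hz. Qed.

Lemma FLq_eq sigma tau (q1 q2 : FLq sigma tau) : proj1_sig q1 = proj1_sig q2 -> q1 = q2.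
Proof. destruct q1 as [P1 H1], q2 as [P2 H2]; simpl; intros ->. f_equal; apply proof_irrelevance. Qed.

Lemma rep_spec sigma tau (q : FLq sigma tau) : FLrel sigma tau (rep q) /\ proj1_sig q = pair_equiv (rep q).
Proof. unfold rep. destruct (constructive_indefinite_description _ _) as [r Hr]. simpl; exact Hr. Qed.

Lemma pe_ext x y : pair_equiv x y -> pair_equiv x = pair_equiv y.
Proof. intros H. apply functional_extensionality; intro z. apply propositional_extensionality; split; intro H'.
  - apply pair_equiv_trans with x; auto using pair_equiv_sym.
  - apply pair_equiv_trans with y; auto. Qed.

Lemma gbar_rep sigma tau (q : FLq sigma tau) x : proj1_sig q x ->
  g_bar sigma tau q = gluing_param sigma tau (fst x) (snd x).
Proof. intros H. unfold g_bar. destruct (rep_spec sigma tau q) as [_ E]. rewrite E in H. apply gp_inv; auto. Qed.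

Lemma le_sum16 (T : I4 -> I4 -> R) m j : (forall a b, 0 <= T a b) ->
  T m j <= sum4 (fun m => sum4 (fun j => T m j)).
Proof. intros P. pose proof (P i1 i1). pose proof (P i1 i2). pose proof (P i1 i3). pose proof (P i1 i4). pose proof (P i2 i1). pose proof (P i2 i2). pose proof (P i2 i3). pose proof (P i2 i4). pose proof (P i3 i1). pose proof (P i3 i2). pose proof (P i3 i3). pose proof (P i3 i4). pose proof (P i4 i1). pose proof (P i4 i2). pose proof (P i4 i3). pose proof (P i4 i4). unfold sum4; destruct m, j; lra. Qed.

Lemma bound16 (X Y : I4 -> I4 -> R) m j :
  Rabs (X m j) <= 1 + sum4 (fun m => sum4 (fun j => Rabs (X m j) + Rabs (Y m j))) /\
  Rabs (Y m j) <= 1 + sum4 (fun m => sum4 (fun j => Rabs (X m j) + Rabs (Y m j))).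
Proof.
  assert (P : forall m j, 0 <= Rabs (X m j) + Rabs (Y m j)) by (intros; pose proof (Rabs_pos (X m0 j0)); pose proof (Rabs_pos (Y m0 j0)); lra).
  pose proof (le_sum16 (fun m j => Rabs (X m j) + Rabs (Y m j)) m j P). cbv beta in H.
  pose proof (Rabs_pos (X m j)). pose proof (Rabs_pos (Y m j)). split; lra.
Qed.

Theorem lemma3p2 (sigma tau : I4 -> I4) (F E : tetrep) :
  is_edge_face sigma -> is_edge_face tau ->
  is_tet_flags F -> is_tet_flags E ->
  glueable_classes sigma tau F E ->
  homeomorphism_between (open_FLq sigma tau) (Gset sigma tau F E)
    open_set (fun t : R => t <> 0) (g_bar sigma tau).
Proof.
  intros Hs Ht HF HE [F0 [E0 [HF0 [HE0 [TF [TE Hgl]]]]]].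
  assert (FL0 : FLrel sigma tau (F0, E0)) by (split; [|split]; auto).
  set (g0 := gluing_param sigma tau F0 E0).
  assert (Hg0 : g0 <> 0) by (apply (gp_nz sigma tau (F0,E0)); auto).
  pose proof (kap_nz sigma F0 Hs HF0) as Hk. set (k := kap sigma F0) in *.
  set (cf := fun t => (t / g0 - 1) / k).
  assert (Hcf1 : forall t, 1 + cf t * k = t / g0) by (intros; unfold cf; field; auto).
  assert (Hcf : forall t, t <> 0 -> 1 + cf t * k <> 0).
  { intros t Ht0. rewrite Hcf1. unfold Rdiv; apply Rmult_integral_contrapositive_currified; auto.
    apply Rinv_neq_0_compat; auto. }
  set (fixt := fun t => if Req_EM_T t 0 then g0 else t).
  assert (Hfix : forall t, fixt t <> 0) by (intro t; unfold fixt; destruct (Req_EM_T t 0); auto).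
  assert (Hfix2 : forall t, t <> 0 -> fixt t = t) by (intros t Ht'; unfold fixt; destruct (Req_EM_T t 0); [contradiction|auto]).
  assert (HX : forall t, FLrel sigma tau (xg sigma F0 E0 (cf (fixt t)))) by (intro t; apply FL_xg; auto).
  set (cls := fun x (H : FLrel sigma tau x) =>
    exist (fun P => exists x, FLrel sigma tau x /\ P = pair_equiv x) (pair_equiv x) (ex_intro _ x (conj H eq_refl)) : FLq sigma tau).
  set (h := fun t => cls _ (HX t)).
  assert (Eh : forall y, y <> 0 -> proj1_sig (h y) = pair_equiv (xg sigma F0 E0 (cf y))).
  { intros y Hy. simpl. rewrite Hfix2; auto. }
  assert (FLy : forall y, y <> 0 -> FLrel sigma tau (xg sigma F0 E0 (cf y))) by (intros; apply FL_xg; auto).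
  assert (GH : forall y, y <> 0 -> g_bar sigma tau (h y) = y).
  { intros y Hy. rewrite (gbar_rep _ _ (h y) (xg sigma F0 E0 (cf y))) by (rewrite Eh; auto; apply pair_equiv_refl).
    rewrite gp_xg'. fold k g0. rewrite Hcf1. field. auto. }
  unfold homeomorphism_between. split; [|split].
  -
    intros q _. unfold g_bar. destruct (rep_spec _ _ q) as [Hr _]. apply gp_nz; auto.
  -
    intros V HV. exists (fun q => V (g_bar sigma tau q)). split; [|intros; reflexivity].
    exists (fun x => args sigma tau x gden <> 0 /\ V (gluing_param sigma tau (fst x) (snd x))). split.
    + intros x [Hd Hv]. destruct (HV _ Hv) as [del Hdel].
      destruct (ctsf_den sigma tau x (Rabs (args sigma tau x gden))) as [d1 [D1 H1]]; [apply Rabs_pos_lt; auto|].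
      destruct (ctsf_gp sigma tau x Hd del (cond_pos del)) as [d2 [D2 H2]].
      exists (Rmin d1 d2). split; [apply Rmin_pos; auto|]. intros y Hy. split.
      * intro Z. pose proof (H1 y (close_mono _ _ _ _ (Rmin_l d1 d2) Hy)) as A. rewrite Z in A.
        rewrite Rminus_0_l, Rabs_Ropp in A. lra.
      * apply Hdel. unfold disc. apply H2. apply (close_mono _ _ _ _ (Rmin_r d1 d2) Hy).
    + intros x Hx. split.
      * intros [q [Vq Hqx]]. rewrite (gbar_rep _ _ q x Hqx) in Vq. split; auto. apply FL_nz; auto.
      * intros [_ Vx]. exists (cls x Hx). split.
        -- rewrite (gbar_rep _ _ _ x); auto. simpl; apply pair_equiv_refl.
        -- simpl; apply pair_equiv_refl.
  - exists h. split; [|split; [|split]].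
    +
      intros y Hy. exists (xg sigma F0 E0 (cf (fixt y))). split; [simpl; apply pair_equiv_refl|]. split.
      * exact TF.
      * apply tet_equiv_trans with E0; auto. apply xg_equiv; auto.
    +
      intros q [x [Hq [T1 T2]]]. destruct (rep_spec _ _ q) as [Hr Er].
      assert (Prx : pair_equiv (rep q) x) by (rewrite <- Er; auto).
      assert (Eg : g_bar sigma tau q = gluing_param sigma tau (fst (rep q)) (snd (rep q))) by reflexivity.
      destruct (rep q) as [F1 E1] eqn:Erq.
      assert (TF1 : tet_equiv F0 F1).
      { apply tet_equiv_trans with F. apply tet_equiv_sym; auto.
        apply tet_equiv_trans with (fst x); auto. apply pair_equiv_fst in Prx. apply tet_equiv_sym; auto. }
      assert (TE1 : tet_equiv E0 E1).
      { apply tet_equiv_trans with E. apply tet_equiv_sym; auto.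
        apply tet_equiv_trans with (snd x); auto. apply pair_equiv_snd in Prx. apply tet_equiv_sym; auto. }
      destruct (classify sigma tau F0 E0 Hs HF0 Hgl F1 E1 Hr TF1 TE1) as [g [Hg Peq]].
      fold k in Hg.
      assert (Eg2 : g_bar sigma tau q = (1 + g * k) * g0).
      { rewrite Eg. rewrite (gp_inv sigma tau _ _ Peq). apply gp_xg'. }
      assert (Ht0 : (1 + g * k) * g0 <> 0) by (apply Rmult_integral_contrapositive_currified; auto).
      rewrite Eg2. apply FLq_eq. rewrite Eh by auto.
      replace (cf ((1 + g * k) * g0)) with g by (unfold cf; field; auto).
      rewrite Er. symmetry. apply pe_ext. auto.
    +
      intros y Hy. apply GH; auto.
    +
      intros V [O [HO HOV]]. exists (fun y => y <> 0 /\ O (xg sigma F0 E0 (cf y))). split.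
      * intros y [Hy Oy]. destruct (HO _ Oy) as [eps [He Hc]].
        set (X := fun m j => ev (piF sigma F0) (tV E0 m) * PF sigma F0 j).
        set (Y := fun m j => ev (tEta E0 m) (PF sigma F0) * piF sigma F0 j).
        set (K := 1 + sum4 (fun m => sum4 (fun j => Rabs (X m j) + Rabs (Y m j)))).
        assert (HK : 0 < K).
        { assert (P : forall a b, 0 <= Rabs (X a b) + Rabs (Y a b)) by (intros; pose proof (Rabs_pos (X a b)); pose proof (Rabs_pos (Y a b)); lra).
          pose proof (le_sum16 (fun m j => Rabs (X m j) + Rabs (Y m j)) i1 i1 P) as B. cbv beta in B.
          pose proof (P i1 i1). unfold K. lra. }
        assert (C1 : continuity_pt cf y) by (unfold cf; reg).
        assert (C2 : continuity_pt (fun z => ginv k (cf z)) y).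
        { unfold ginv. pose proof (Hcf y Hy). unfold cf in *. reg. }
        destruct (cont_eps _ _ C1 (eps / K)) as [d1 [D1 H1]]; [apply Rdiv_lt_0_compat; auto|].
        destruct (cont_eps _ _ C2 (eps / K)) as [d2 [D2 H2]]; [apply Rdiv_lt_0_compat; auto|].
        assert (Pd : 0 < Rmin (Rmin d1 d2) (Rabs y)) by (repeat apply Rmin_pos; auto; apply Rabs_pos_lt; auto).
        exists (mkposreal _ Pd). intros z Hz. unfold disc in Hz; simpl in Hz.
        assert (Z1 : Rabs (z - y) < d1) by (eapply Rlt_le_trans; [exact Hz|]; eapply Rle_trans; apply Rmin_l).
        assert (Z2 : Rabs (z - y) < d2) by (eapply Rlt_le_trans; [exact Hz|]; eapply Rle_trans; [apply Rmin_l|apply Rmin_r]).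
        assert (Z3 : Rabs (z - y) < Rabs y) by (eapply Rlt_le_trans; [exact Hz|]; apply Rmin_r).
        assert (Hz0 : z <> 0) by (intro Z; rewrite Z, Rminus_0_l, Rabs_Ropp in Z3; lra).
        split; auto. apply Hc.
        assert (KEY : forall dl c, Rabs dl < eps / K -> Rabs c <= K -> Rabs (dl * c) < eps).
        { intros dl c A B. rewrite Rabs_mult.
          apply Rle_lt_trans with (Rabs dl * K). apply Rmult_le_compat_l; auto; apply Rabs_pos.
          apply Rmult_lt_reg_r with (/ K). apply Rinv_0_lt_compat; auto.
          rewrite Rmult_assoc, Rinv_r by lra. rewrite Rmult_1_r. exact A. }
        intros m j. unfold xg, tact; cbn [tV tEta fst snd]. rewrite !Rminus_diag, !Rabs_R0.
        destruct (bound16 X Y m j) as [BX BY]. fold K in BX, BY.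
        split; [auto|split; [auto|split]].
        -- unfold MM. rewrite !act_Mg.
           replace (tV E0 m j + cf y * ev (piF sigma F0) (tV E0 m) * PF sigma F0 j -
              (tV E0 m j + cf z * ev (piF sigma F0) (tV E0 m) * PF sigma F0 j)) with ((cf z - cf y) * - X m j)
              by (unfold X; ring).
           apply KEY. apply H1; auto. rewrite Rabs_Ropp; auto.
        -- unfold MI. rewrite !cov_Mg. fold k.
           replace (tEta E0 m j + ginv k (cf y) * ev (tEta E0 m) (PF sigma F0) * piF sigma F0 j -
              (tEta E0 m j + ginv k (cf z) * ev (tEta E0 m) (PF sigma F0) * piF sigma F0 j)) with
              ((ginv k (cf z) - ginv k (cf y)) * - Y m j) by (unfold Y; ring).
           apply KEY. apply (H2 z); auto. rewrite Rabs_Ropp; auto.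
      * intros y Hy. split.
        -- intro Vh. split; auto. apply (HOV _ (FLy y Hy)). exists (h y). split; auto.
           rewrite Eh by auto. apply pair_equiv_refl.
        -- intros [_ Oy]. apply (HOV _ (FLy y Hy)) in Oy. destruct Oy as [q [Vq Hq]].
           replace (h y) with q; auto. apply FLq_eq. rewrite Eh by auto.
           destruct (rep_spec _ _ q) as [_ Eq]. rewrite Eq in Hq |- *. apply pe_ext; auto.
Qed.
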